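(* Let $(V,Y(\cdot,(x,\varphi)),\mathbf{1},\tau)$ be an $N=1$ NS-VOSA over $\bigwedge_*$ with odd formal variables. Let $t^{1/2}$ be an even formal variable, let $B=\{B_j\}_{j\in\mathbb{Z}_+}$ be a sequence of even elements and $N=\{N_{j-1/2}\}_{j\in\mathbb{Z}_+}$ a sequence of odd elements of $\bigwedge_\infty$. Then for every $u\in V$, $$\Big[\sum_{j\in\mathbb{Z}_+}\big(t^jB_jL(-j)+t^{j-\frac12}N_{j-\frac12}G(-j+\tfrac12)\big),\,Y(u,(x,\varphi))\Big]$$ $$=Y\Big(\sum_{m=-1}^{\infty}\sum_{j\in\mathbb{Z}_+}\binom{-j+1}{m+1}x^{-j-m}\Big(\big(t^jB_j+2\varphi t^{j-\frac12}N_{j-\frac12}\big)L(m)+\big(t^{j-\frac12}N_{j-\frac12}+\varphi x^{-1}\tfrac{(-j-m)}{2}t^jB_j\big)G(m+\tfrac12)\Big)u,\,(x,\varphi)\Big),$$ where the bracket is the supercommutator and both sides are formal series in $t^{1/2}$, $x,x^{-1}$, $\varphi$ with coefficients in $\mathrm{End}$ of $V$ (extended to the completion).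
   Context: Let $\bigwedge_\infty$ be the infinite Grassmann algebra over $\mathbb{C}$ and $\bigwedge_*\subseteq\bigwedge_\infty$ a Grassmann subalgebra. Even formal variables commute with everything; odd formal variables anticommute with odd formal variables and odd Grassmann elements. Binomial expressions $(a+b)^n$ in even quantities are expanded in nonnegative powers of the second; functions of even and odd variables are expanded about the even ones, e.g. $f(x+\varphi_1\varphi_2)=f(x)+\varphi_1\varphi_2f'(x)$; $\delta(x)=\sum_{n\in\mathbb{Z}}x^n$. An $N=1$ NS-VOSA over $\bigwedge_*$ with odd formal variables is a $\frac12\mathbb{Z}$-graded and $\mathbb{Z}_2$-graded $\bigwedge_\infty$-module $V=\coprod_{k}V_{(k)}=V^0\oplus V^1$ on which only $\bigwedge_*$ acts nontrivially, with $\dim V_{(k)}<\infty$ and $V_{(k)}=0$ for $k$ sufficiently small, together with a linear map $v\mapsto Y(v,(x,\varphi))=\sum_{n\in\mathbb{Z}}v_nx^{-n-1}+\varphi\sum_{n\in\mathbb{Z}}v_{n-1/2}x^{-n-1}\in(\mathrm{End}\,V)[[x,x^{-1}]][\varphi]$ ($v_n$ of parity $\eta(v)$, $v_{n-1/2}$ of opposite parity; $x$ even, $\varphi$ odd), and vectors $\mathbf 1\in V^0_{(0)}$, $\tau\in V^1_{(3/2)}$, such that: $u_nv=0$ for $n\in\frac12\mathbb{Z}$ large; $Y(\mathbf1,(x,\varphi))=1$; $Y(v,(x,\varphi))\mathbf1\in V[[x]][\varphi]$ with value $v$ at $(x,\varphi)=0$; the Jacobi identity $x_0^{-1}\delta(\frac{x_1-x_2-\varphi_1\varphi_2}{x_0})Y(u,(x_1,\varphi_1))Y(v,(x_2,\varphi_2))-(-1)^{\eta(u)\eta(v)}x_0^{-1}\delta(\frac{x_2-x_1+\varphi_1\varphi_2}{-x_0})Y(v,(x_2,\varphi_2))Y(u,(x_1,\varphi_1))=x_2^{-1}\delta(\frac{x_1-x_0-\varphi_1\varphi_2}{x_2})Y(Y(u,(x_0,\varphi_1-\varphi_2))v,(x_2,\varphi_2))$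 holds for homogeneous $u,v$; writing $Y(\tau,(x,\varphi))=\sum_{n}G(n+\frac12)x^{-n-2}+2\varphi\sum_nL(n)x^{-n-2}$, the operators $L(n),G(n+\frac12)$ satisfy the $N=1$ Neveu–Schwarz relations $[L(m),L(n)]=(m-n)L(m+n)+\frac{m^3-m}{12}\delta_{m+n,0}c$, $[G(m+\frac12),L(n)]=(m-\frac{n-1}{2})G(m+n+\frac12)$, $[G(m+\frac12),G(n-\frac12)]=2L(m+n)+\frac{m^2+m}{3}\delta_{m+n,0}c$ for some $c\in\mathbb{C}$ (the rank); $L(0)v=kv$ for $v\in V_{(k)}$; and $(\partial_\varphi+\varphi\partial_x)Y(v,(x,\varphi))=Y(G(-\frac12)v,(x,\varphi))$. *)

(* Defs.v *)
From mathcomp Require Import Rstruct.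
From HB Require Import structures.
From mathcomp Require Import all_boot all_order all_algebra.
From mathcomp Require Import complex finmap.
Set Implicit Arguments. Unset Strict Implicit. Unset Printing Implicit Defensive.
Import Order.TTheory GRing.Theory Num.Theory.
Local Open Scope ring_scope.

Notation CC := (complex.complex Rdefinitions.R).

(* The infinite Grassmann algebra.  Generators zeta_0, zeta_1, ...;    *)
(* an element is the coefficient function S |-> coefficient of the     *)
(* monomial zeta_{s1} ... zeta_{sk} (s1 < ... < sk, S = {s1..sk}).     *)
(* Elements of /\_oo are those with finite support ([gfin]).           *)
Definition grass := {fset nat} -> CC.

Definition gfin (a : grass) : Prop :=
  exists s : seq {fset nat}, forall S, S \notin s -> a S = 0.

(* sign of zeta_T zeta_U = sign * zeta_(T u U) for disjoint T, U *)
Definition gsign (T U : {fset nat}) : CC :=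
  (-1) ^+ (\sum_(i <- T) count (fun j => (j < i)%N) U)%N.

Definition gadd (a b : grass) : grass := fun S => a S + b S.
Definition gmul (a b : grass) : grass := fun S =>
  \sum_(T <- fpowerset S) gsign T ((S `\` T)%fset) * a T * b ((S `\` T)%fset).
Definition gcst (c : CC) : grass := fun S => if S == fset0%fset then c else 0.
Definition ggen (i : nat) : grass := fun S => (S == [fset i]%fset)%:R.

Definition geven (a : grass) : Prop := forall S, odd #|` S| -> a S = 0.
Definition godd (a : grass) : Prop := forall S, ~~ odd #|` S| -> a S = 0.
Definition ghom (e : bool) (a : grass) : Prop := if e then godd a else geven a.

(* The Grassmann subalgebra /\_* generated by the generators zeta_i, i in gens;
   gproj is the projection of /\_oo onto /\_* killing the other generators. *)
Definition gproj (gens : pred nat) (a : grass) : grass :=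
  fun S => if all gens S then a S else 0.

Definition sgnv (V : zmodType) (b : bool) (v : V) : V := if b then - v else v.

Definition binz (l : int) (i : nat) : CC :=
  (\prod_(k < i) (l%:~R - k%:R)) / (i`!)%:R.

(* "the (eventually zero) series sum_(i>=0) f i equals s" *)
Definition sums (V : zmodType) (f : nat -> V) (s : V) : Prop :=
  exists N, forall M, (N <= M)%N -> \sum_(i < M) f i = s.
Definition sum_eq (V : zmodType) (f g : nat -> V) : Prop :=
  exists N, forall M, (N <= M)%N -> \sum_(i < M) f i = \sum_(i < M) g i.

Section Raw.
Variables (V : zmodType) (act : grass -> V -> V).
Local Notation sc c v := (act (gcst c) v).

(* Coefficient of x0^{-l-1} x1^{-m-1} x2^{-n-1}, i-th summand, of
   x0^{-1} delta((x1-x2)/x0) X(x1) Z(x2) w *)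
Definition jD (l m n : int) (X Z : int -> V -> V) (w : V) (i : nat) : V :=
  sgnv (odd i) (sc (binz l i) (X (l + m - i%:Z) (Z (n + i%:Z) w))).
(* ... of  x0^{-1} delta((x2-x1)/(-x0)) Z(x2) X(x1) w *)
Definition jE (l m n : int) (Z X : int -> V -> V) (w : V) (i : nat) : V :=
  sgnv (odd `|l|) (sgnv (odd i)
    (sc (binz l i) (Z (l + n - i%:Z) (X (m + i%:Z) w)))).
(* ... of  sum_k k x0^{-k-1} (x1-x2)^{k-1} X(x1) Z(x2) w *)
Definition jD' (l m n : int) (X Z : int -> V -> V) (w : V) (i : nat) : V :=
  sc l%:~R (sgnv (odd i)
    (sc (binz (l - 1) i) (X (l + m - 1 - i%:Z) (Z (n + i%:Z) w)))).
(* ... of  sum_k k (-1)^k x0^{-k-1} (x2-x1)^{k-1} Z(x2) X(x1) w *)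
Definition jE' (l m n : int) (Z X : int -> V -> V) (w : V) (i : nat) : V :=
  sc l%:~R (sgnv (odd `|l|) (sgnv (odd i)
    (sc (binz (l - 1) i) (Z (l + n - 1 - i%:Z) (X (m + i%:Z) w))))).
(* ... of  x2^{-1} delta((x1-x0)/x2) Yv(W(x0), x2) w,  W(x0) = sum_q Wv q x0^{-q-1} *)
Definition jF (l m n : int) (Yv : V -> int -> V -> V) (Wv : int -> V) (w : V)
  (i : nat) : V :=
  sc (binz m i) (Yv (Wv (l + i%:Z)) (m + n - i%:Z) w).
(* ... of  sum_k k x2^{-k-1} (x1-x0)^{k-1} Yv(W(x0), x2) w *)
Definition jF' (l m n : int) (Yv : V -> int -> V -> V) (Wv : int -> V) (w : V)
  (i : nat) : V :=
  sc ((i%:R - m%:~R) * binz m i) (Yv (Wv (l + i%:Z)) (m + n - i%:Z - 1) w).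

Variables (Y0 Y1 : V -> int -> V -> V).
(* The Jacobi identity for homogeneous u (parity eu), v (parity ev),
   component by component: coefficient of x0^{-l-1} x1^{-m-1} x2^{-n-1}
   and of the monomials 1, phi1, phi2, phi1 phi2, applied to w. *)
Definition jacobi_at (eu ev : bool) (u v : V) (l m n : int) (w : V) : Prop :=
  let s := eu && ev in
  [/\ sum_eq (fun i => jD l m n (Y0 u) (Y0 v) w i
                       - sgnv s (jE l m n (Y0 v) (Y0 u) w i))
             (fun i => jF l m n Y0 (fun q => Y0 u q v) w i),
      sum_eq (fun i => jD l m n (Y1 u) (Y0 v) w i
                       - sgnv (s (+) ev) (jE l m n (Y0 v) (Y1 u) w i))
             (fun i => jF l m n Y0 (fun q => Y1 u q v) w i),
      sum_eq (fun i => sgnv eu (jD l m n (Y0 u) (Y1 v) w i)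
                       - sgnv s (jE l m n (Y1 v) (Y0 u) w i))
             (fun i => jF l m n Y1 (fun q => Y0 u q v) w i
                       - jF l m n Y0 (fun q => Y1 u q v) w i) &
      sum_eq (fun i => sgnv (~~ eu) (jD l m n (Y1 u) (Y1 v) w i)
                       - jD' l m n (Y0 u) (Y0 v) w i
                       - sgnv s (sgnv ev (jE l m n (Y1 v) (Y1 u) w i)
                                 + jE' l m n (Y0 v) (Y0 u) w i))
             (fun i => jF l m n Y1 (fun q => Y1 u q v) w i
                       - jF' l m n Y0 (fun q => Y0 u q v) w i)].

Variable tau : V.
(* Y(tau,(x,phi)) = sum G(n+1/2) x^{-n-2} + 2 phi sum L(n) x^{-n-2} *)
Definition Lraw (n : int) (w : V) : V := sc (1 / 2) (Y1 tau (n + 1) w).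
(* Graw m = G(m + 1/2) *)
Definition Graw (m : int) (w : V) : V := Y0 tau (m + 1) w.
End Raw.

(* formal variables.  Y(v,(x,phi)) = sum_n Y0 v n x^{-n-1}             *)
(*                                  + phi sum_n Y1 v n x^{-n-1},       *)
(* i.e. Y0 v n = v_n and Y1 v n = v_{n-1/2}.                           *)
(* Vpar e = V^e ; Vwt k = V_(k/2).                                      *)
Record NSVOSA (gens : pred nat) (V : zmodType) := {
  act : grass -> V -> V;
  Vpar : bool -> V -> Prop;
  Vwt : int -> V -> Prop;
  Y0 : V -> int -> V -> V;
  Y1 : V -> int -> V -> V;
  vac : V;
  tau : V;
  crank : CC;
  act_addl : forall a b v, gfin a -> gfin b -> act (gadd a b) v = act a v + act b v;
  act_addr : forall a v w, gfin a -> act a (v + w) = act a v + act a w;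
  act_mul : forall a b v, gfin a -> gfin b -> act (gmul a b) v = act a (act b v);
  act_one : forall v, act (gcst 1) v = v;
  act_proj : forall a v, gfin a -> act a v = act (gproj gens a) v;
  par_sub : forall e, Vpar e 0 /\ (forall v w, Vpar e v -> Vpar e w -> Vpar e (v - w));
  par_dec : forall v, exists v0 v1, [/\ Vpar false v0, Vpar true v1 & v = v0 + v1];
  par_dir : forall v, Vpar false v -> Vpar true v -> v = 0;
  par_act : forall e f a v, gfin a -> ghom e a -> Vpar f v -> Vpar (e (+) f) (act a v);
  wt_sub : forall k, Vwt k 0 /\ (forall v w, Vwt k v -> Vwt k w -> Vwt k (v - w));
  wt_act : forall k a v, gfin a -> Vwt k v -> Vwt k (act a v);
  wt_dec : forall v, exists s : seq (int * V),
      (forall p, p \in s -> Vwt p.1 p.2) /\ v = \sum_(p <- s) p.2;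
  wt_dir : forall s : seq (int * V), uniq (map fst s) ->
      (forall p, p \in s -> Vwt p.1 p.2) -> \sum_(p <- s) p.2 = 0 ->
      forall p, p \in s -> p.2 = 0;
  (* dim V_(k) < oo : each V_(k) is finitely generated *)
  wt_fin : forall k, exists s : seq V, (forall x, x \in s -> Vwt k x) /\
      forall v, Vwt k v -> exists c : nat -> grass, (forall i, gfin (c i)) /\
        v = \sum_(i < size s) act (c i) (nth 0 s i);
  wt_low : exists K : int, forall k v, k < K -> Vwt k v -> v = 0;
  Y_add : forall u v n w, Y0 (u + v) n w = Y0 u n w + Y0 v n w /\
                          Y1 (u + v) n w = Y1 u n w + Y1 v n w;
  Y_act : forall e a v n w, gfin a -> ghom e a ->
      Y0 (act a v) n w = act a (Y0 v n w) /\
      Y1 (act a v) n w = sgnv e (act a (Y1 v n w));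
  mode_add : forall v n w1 w2, Y0 v n (w1 + w2) = Y0 v n w1 + Y0 v n w2 /\
                               Y1 v n (w1 + w2) = Y1 v n w1 + Y1 v n w2;
  mode_act : forall e f v a n w, Vpar e v -> gfin a -> ghom f a ->
      Y0 v n (act a w) = sgnv (e && f) (act a (Y0 v n w)) /\
      Y1 v n (act a w) = sgnv ((~~ e) && f) (act a (Y1 v n w));
  mode_par : forall e f v n w, Vpar e v -> Vpar f w ->
      Vpar (e (+) f) (Y0 v n w) /\ Vpar (~~ (e (+) f)) (Y1 v n w);
  trunc : forall u v, exists N : int, forall n, N <= n -> Y0 u n v = 0 /\ Y1 u n v = 0;
  vac_par : Vpar false vac;
  vac_wt : Vwt 0 vac;
  Y_vac : forall n w, Y0 vac n w = (if n == -1 then w else 0) /\ Y1 vac n w = 0;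
  creation : forall v, Y0 v (-1) vac = v /\
      forall n, 0 <= n -> Y0 v n vac = 0 /\ Y1 v n vac = 0;
  jacobi : forall eu ev u v, Vpar eu u -> Vpar ev v ->
      forall l m n w, jacobi_at act Y0 Y1 eu ev u v l m n w;
  tau_par : Vpar true tau;
  tau_wt : Vwt 3 tau;
  NS_LL : forall (m n : int) w,
      Lraw act Y1 tau m (Lraw act Y1 tau n w) - Lraw act Y1 tau n (Lraw act Y1 tau m w)
      = act (gcst (m - n)%:~R) (Lraw act Y1 tau (m + n) w)
        + (if m + n == 0 then act (gcst ((m ^+ 3 - m)%:~R / 12%:R * crank)) w else 0);
  NS_GL : forall (m n : int) w,
      Graw Y0 tau m (Lraw act Y1 tau n w) - Lraw act Y1 tau n (Graw Y0 tau m w)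
      = act (gcst (m%:~R - (n%:~R - 1) / 2%:R)) (Graw Y0 tau (m + n) w);
  NS_GG : forall (m n : int) w,
      Graw Y0 tau m (Graw Y0 tau (n - 1) w) + Graw Y0 tau (n - 1) (Graw Y0 tau m w)
      = act (gcst 2%:R) (Lraw act Y1 tau (m + n) w)
        + (if m + n == 0 then act (gcst ((m ^+ 2 + m)%:~R / 3%:R * crank)) w else 0);
  L0_wt : forall k v, Vwt k v -> Lraw act Y1 tau 0 v = act (gcst (k%:~R / 2%:R)) v;
  (* (d/dphi + phi d/dx) Y(v,(x,phi)) = Y(G(-1/2) v,(x,phi)) *)
  G_deriv : forall v n w,
      Y0 (Graw Y0 tau (-1) v) n w = Y1 v n w /\
      Y1 (Graw Y0 tau (-1) v) n w = act (gcst (- n%:~R)) (Y0 v (n - 1) w)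
}.

Definition Lop gens V (A : NSVOSA gens V) := Lraw (act A) (Y1 A) (tau A).
Definition Gop gens V (A : NSVOSA gens V) := Graw (Y0 A) (tau A).
Definition scal gens V (A : NSVOSA gens V) (c : CC) (v : V) := act A (gcst c) v.
(* commutator of operators (the supercommutator, when the first one is even) *)
Definition opcomm (V : zmodType) (O X : V -> V) (w : V) : V := O (X w) - X (O w).

(* Main.v *)
Require Import Defs.
From mathcomp Require Import Rstruct.
From mathcomp Require Import all_boot all_order all_algebra.
From mathcomp Require Import complex finmap.
From mathcomp Require Import zify ring.
Import GRing.Theory Num.Theory.
Set Implicit Arguments. Unset Strict Implicit. Unset Printing Implicit Defensive.
Local Open Scope ring_scope.

Notation scl A c v := (act A (gcst c) v).

Lemma gcst_fin c : gfin (gcst c).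
Proof. exists [:: fset0]%fset => S; rewrite /gcst; case: eqP => // ->; by rewrite mem_seq1 eqxx. Qed.

Lemma gcst_even c : geven (gcst c).
Proof. move=> S; rewrite /gcst; case: eqP => // ->; by rewrite cardfs0. Qed.

Lemma gmul_cstl c a : gmul (gcst c) a = fun S => c * a S.
Proof.
apply: boolp.funext => S; rewrite /gmul.
rewrite (bigD1_seq fset0) ?fset_uniq //=; last by rewrite fpowersetE fsub0set.
rewrite big1_seq ?addr0.
  by rewrite /gcst eqxx /gsign big_seq_fset0 expr0 mul1r fsetD0.
move=> T /andP [HT _]; rewrite /gcst (negbTE HT); by rewrite mulr0 mul0r.
Qed.

Lemma gmul_cstr c a : gmul a (gcst c) = fun S => a S * c.
Proof.
apply: boolp.funext => S; rewrite /gmul.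
rewrite (bigD1_seq S) ?fset_uniq //=; last by rewrite fpowersetE fsubset_refl.
rewrite big1_seq ?addr0.
  rewrite /gcst fsetDv eqxx /gsign big1 ?expr0 ?mul1r // => i _.
move=> T /andP [HT HS]; rewrite /gcst.
have -> : (S `\` T == fset0)%fset = false.
  apply/negbTE; rewrite fsetD_eq0; apply: contra HT => HST.
  by rewrite eq_sym eqEfsubset HST -fpowersetE HS.
by rewrite mulr0.
Qed.


Lemma act0 gens V (A : NSVOSA gens V) a : gfin a -> act A a 0 = 0.
Proof.
move=> Ha; apply: (addrI (act A a 0)); by rewrite -act_addr // !addr0.
Qed.

Lemma actN gens V (A : NSVOSA gens V) a v : gfin a -> act A a (- v) = - act A a v.
Proof.
move=> Ha; apply/eqP; rewrite -subr_eq0 opprK -act_addr // addNr act0 //.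
Qed.

Lemma actB gens V (A : NSVOSA gens V) a v w : gfin a ->
  act A a (v - w) = act A a v - act A a w.
Proof. by move=> Ha; rewrite act_addr // actN. Qed.

Lemma act_sum gens V (A : NSVOSA gens V) a (F : nat -> V) M : gfin a ->
  act A a (\sum_(i < M) F i) = \sum_(i < M) act A a (F i).
Proof.
move=> Ha; apply: (big_morph (act A a)); [by move=> x y; rewrite act_addr | exact: act0].
Qed.

Lemma act_sgnv gens V (A : NSVOSA gens V) a b v : gfin a ->
  act A a (sgnv b v) = sgnv b (act A a v).
Proof. by case: b => Ha //=; rewrite actN. Qed.

Lemma scalD gens V (A : NSVOSA gens V) c1 c2 v :
  scl A (c1 + c2) v = scl A c1 v + scl A c2 v.
Proof.
rewrite -act_addl ?gcst_fin //; f_equal.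
rewrite /gadd /gcst; apply: (@boolp.funext _ _ (fun S => if S == fset0 then c1 + c2 else 0)) => S.
case: eqP => _; [by [] | by rewrite addr0]. all: exact: gcst_fin.
Qed.

Lemma scal0 gens V (A : NSVOSA gens V) v : scl A 0 v = 0.
Proof.
apply: (addrI (scl A 0 v)); by rewrite -scalD !addr0.
Qed.

Lemma scalN gens V (A : NSVOSA gens V) c v : scl A (- c) v = - scl A c v.
Proof. by apply/eqP; rewrite -subr_eq0 opprK -scalD addNr scal0. Qed.

Lemma scal1 gens V (A : NSVOSA gens V) v : scl A 1 v = v.
Proof. exact: act_one. Qed.

Lemma scalM gens V (A : NSVOSA gens V) a b v :
  scl A a (scl A b v) = scl A (a * b) v.
Proof.
rewrite -(act_mul A v (gcst_fin a) (gcst_fin b)) gmul_cstl; f_equal.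
rewrite /gcst; apply: (@boolp.funext _ _ (fun S => a * (if S == fset0 then b else 0))) => S.
by case: eqP => _; rewrite ?mulr0.
Qed.

Lemma scal_act gens V (A : NSVOSA gens V) x c v : gfin x ->
  act A x (scl A c v) = scl A c (act A x v).
Proof.
move=> Hx; rewrite -(act_mul A v Hx (gcst_fin c)) -(act_mul A v (gcst_fin c) Hx).
rewrite gmul_cstl gmul_cstr; f_equal.
by apply: (@boolp.funext _ _ (fun S => x S * c)) => S; rewrite mulrC.
Qed.

Lemma scal_addr gens V (A : NSVOSA gens V) c v w :
  scl A c (v + w) = scl A c v + scl A c w.
Proof. exact: act_addr (gcst_fin c). Qed.

Lemma scl_0 gens V (A : NSVOSA gens V) c : scl A c 0 = 0.
Proof. exact: act0 (gcst_fin c). Qed.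

Lemma scal_sub gens V (A : NSVOSA gens V) c v w :
  scl A c (v - w) = scl A c v - scl A c w.
Proof. exact: actB (gcst_fin c). Qed.

Lemma scal_opp gens V (A : NSVOSA gens V) c v :
  scl A c (- v) = - scl A c v.
Proof. exact: actN (gcst_fin c). Qed.

Lemma Y0_act gens V (A : NSVOSA gens V) a v n w : gfin a -> geven a ->
  Y0 A (act A a v) n w = act A a (Y0 A v n w).
Proof. by move=> Ha He; case: (@Y_act _ _ A false a v n w Ha He). Qed.

Lemma Y1_act gens V (A : NSVOSA gens V) a v n w : gfin a -> geven a ->
  Y1 A (act A a v) n w = act A a (Y1 A v n w).
Proof. by move=> Ha He; case: (@Y_act _ _ A false a v n w Ha He). Qed.

Lemma Y0_actodd gens V (A : NSVOSA gens V) a v n w : gfin a -> godd a ->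
  Y0 A (act A a v) n w = act A a (Y0 A v n w).
Proof. by move=> Ha He; case: (@Y_act _ _ A true a v n w Ha He). Qed.

Lemma Y1_actodd gens V (A : NSVOSA gens V) a v n w : gfin a -> godd a ->
  Y1 A (act A a v) n w = - act A a (Y1 A v n w).
Proof. by move=> Ha He; case: (@Y_act _ _ A true a v n w Ha He). Qed.

Lemma Y0_scal gens V (A : NSVOSA gens V) c v n w :
  Y0 A (scl A c v) n w = scl A c (Y0 A v n w).
Proof. exact: Y0_act (gcst_fin c) (gcst_even c). Qed.

Lemma Y1_scal gens V (A : NSVOSA gens V) c v n w :
  Y1 A (scl A c v) n w = scl A c (Y1 A v n w).
Proof. exact: Y1_act (gcst_fin c) (gcst_even c). Qed.

Lemma mode0_act gens V (A : NSVOSA gens V) e f v a n w : Vpar A e v -> gfin a -> ghom f a ->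
  Y0 A v n (act A a w) = sgnv (e && f) (act A a (Y0 A v n w)).
Proof. by move=> Hv Ha Hf; case: (mode_act n w Hv Ha Hf). Qed.

Lemma mode1_act gens V (A : NSVOSA gens V) e f v a n w : Vpar A e v -> gfin a -> ghom f a ->
  Y1 A v n (act A a w) = sgnv (~~ e && f) (act A a (Y1 A v n w)).
Proof. by move=> Hv Ha Hf; case: (mode_act n w Hv Ha Hf). Qed.

Lemma mode0_scal gens V (A : NSVOSA gens V) e v c n w : Vpar A e v ->
  Y0 A v n (scl A c w) = scl A c (Y0 A v n w).
Proof.
move=> Hv; by rewrite (@mode0_act _ _ A e false v (gcst c) n w Hv (gcst_fin c) (gcst_even c)) andbF.
Qed.

Lemma mode1_scal gens V (A : NSVOSA gens V) e v c n w : Vpar A e v ->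
  Y1 A v n (scl A c w) = scl A c (Y1 A v n w).
Proof.
move=> Hv; by rewrite (@mode1_act _ _ A e false v (gcst c) n w Hv (gcst_fin c) (gcst_even c)) andbF.
Qed.

Lemma binz0 l : binz l 0 = 1.
Proof. by rewrite /binz big_ord0 fact0 divr1. Qed.

Lemma binz_0S i : binz 0 i.+1 = 0.
Proof. by rewrite /binz big_ord_recl /= subrr mul0r mul0r. Qed.

Lemma sgnv0 (V : zmodType) b : sgnv b (0 : V) = 0.
Proof. by case: b => //=; rewrite oppr0. Qed.

Lemma sgnvK (V : zmodType) b (v : V) : sgnv b (sgnv b v) = v.
Proof. by case: b => //=; rewrite opprK. Qed.

Lemma sum_eq_sums (V : zmodType) (f g : nat -> V) :
  (forall i, f i.+1 = 0) -> Defs.sum_eq f g -> sums g (f 0%N).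
Proof.
move=> Hf [N HN]; exists (maxn N 1) => M HM.
have HNM : (N <= M)%N by apply: leq_trans HM; exact: leq_maxl.
rewrite -HN //; case: M HM {HN HNM} => [|M] HM; first by rewrite geq_max andbF in HM.
by rewrite big_ord_recl big1 ?addr0 // => i _; rewrite Hf.
Qed.

Lemma sum_eq_sums' (V : zmodType) (f g : nat -> V) s :
  Defs.sum_eq f g -> (forall i, f i.+1 = 0) -> f 0%N = s -> sums g s.
Proof. by move=> H1 H2 <-; apply: sum_eq_sums. Qed.

Lemma zE1 (k : int) : 0 + k - 0%:Z = k. Proof. by rewrite add0r; exact: subr0. Qed.
Lemma zE2 (k : int) : k + 0%:Z = k. Proof. exact: addr0. Qed.

Lemma comps gens V (A : NSVOSA gens V) e u m n w : Vpar A e u ->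
  let t := tau A in
  [/\ sums (fun i => jF (act A) 0 m n (Y0 A) (fun q => Y0 A t q u) w i)
           (Y0 A t m (Y0 A u n w) - sgnv e (Y0 A u n (Y0 A t m w))),
      sums (fun i => jF (act A) 0 m n (Y0 A) (fun q => Y1 A t q u) w i)
           (Y1 A t m (Y0 A u n w) - Y0 A u n (Y1 A t m w)),
      sums (fun i => jF (act A) 0 m n (Y1 A) (fun q => Y0 A t q u) w i
                      - jF (act A) 0 m n (Y0 A) (fun q => Y1 A t q u) w i)
           (- Y0 A t m (Y1 A u n w) - sgnv e (Y1 A u n (Y0 A t m w))) &
      sums (fun i => jF (act A) 0 m n (Y1 A) (fun q => Y1 A t q u) w i
                      - jF' (act A) 0 m n (Y0 A) (fun q => Y0 A t q u) w i)
           (Y1 A t m (Y1 A u n w) - Y1 A u n (Y1 A t m w))].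
Proof.
move=> Hu t.
have [C1 C2 C3 C4] := jacobi (tau_par A) Hu 0 m n w.
rewrite /= in C1 C2 C3 C4.
split.
- apply: (@sum_eq_sums' _ _ _ _ C1) => [i|]; rewrite /jD /jE /=.
    by rewrite binz_0S !scal0 !sgnv0 ?oppr0 ?addr0 ?subrr.
  by rewrite binz0 !scal1 !zE1 !zE2.
- apply: (@sum_eq_sums' _ _ _ _ C2) => [i|]; rewrite /jD /jE /=.
    by rewrite binz_0S !scal0 !sgnv0 ?oppr0 ?addr0 ?subrr.
  by rewrite binz0 !scal1 !zE1 !zE2 addbb.
- apply: (@sum_eq_sums' _ _ _ _ C3) => [i|]; rewrite /jD /jE /=.
    by rewrite binz_0S !scal0 !sgnv0 ?oppr0 ?addr0 ?subrr.
  by rewrite binz0 !scal1 !zE1 !zE2.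
- apply: (@sum_eq_sums' _ _ _ _ C4) => [i|]; rewrite /jD /jE /jD' /jE' /=.
    by rewrite binz_0S !scal0 !sgnv0 !(subrr, addr0, sgnv0, subr0, oppr0).
  by rewrite binz0 !scal1 !zE1 !scal0 !zE2 subr0 addr0 sgnvK.
Qed.

Lemma sums_map (V : zmodType) (phi : V -> V) (f g : nat -> V) s t :
  (forall x y, phi (x + y) = phi x + phi y) -> phi 0 = 0 ->
  sums g s -> (forall i, f i = phi (g i)) -> t = phi s -> sums f t.
Proof.
move=> HD H0 [K HK] Hf ->; exists K => M HM.
rewrite -(HK M HM); under eq_bigr => i _ do rewrite Hf.
by apply/esym; apply: (big_morph phi HD H0).
Qed.

Lemma claim1 gens V (A : NSVOSA gens V) e u b (j : nat) (n : int) w :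
  Vpar A e u -> gfin b -> geven b ->
  let OB := fun v => act A b (Lop A (- j%:Z) v) in
  sums (fun i : nat => scal A (binz (1 - j%:Z) i)
              (Y0 A (act A b (Lop A (i%:Z - 1) u)) (n - j%:Z - i%:Z + 1) w))
           (opcomm OB (Y0 A u n) w).
Proof.
move=> Hu Hb Hbe OB.
have [_ C _ _] := comps (1 - j%:Z) n w Hu.
apply: (@sums_map _ (fun y => act A b (scl A (1/2) y)) _ _ _ _ _ _ C).
- by move=> x y; rewrite scal_addr act_addr.
- by rewrite scl_0 act0.
- move=> i; rewrite /scal /Lop /Lraw /jF /= Y0_act // Y0_scal subrK add0r.
  have -> : n - j%:Z - i%:Z + 1 = 1 - j%:Z + n - i%:Z by lia.
  by rewrite -scal_act // !scalM mulrC.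
rewrite /OB /opcomm /Lop /Lraw (mode0_act _ _ Hu Hb (f:=false)) // andbF /=.
rewrite (mode0_scal _ _ _ Hu) scal_sub actB //.
by have -> : - j%:Z + 1 = 1 - j%:Z by rewrite addrC.
Qed.

Lemma claim3 gens V (A : NSVOSA gens V) e u b (j : nat) (n : int) w :
  Vpar A e u -> gfin b -> godd b ->
  let ON := fun v => act A b (Gop A (- j%:Z) v) in
  sums (fun i : nat => scal A (binz (1 - j%:Z) i)
              (Y0 A (act A b (Gop A (i%:Z - 1) u)) (n - j%:Z - i%:Z + 1) w))
           (opcomm ON (Y0 A u n) w).
Proof.
move=> Hu Hb Hbo ON.
have [C _ _ _] := comps (1 - j%:Z) n w Hu.
apply: (@sums_map _ (fun y => act A b y) _ _ _ _ _ _ C).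
- by move=> x y; rewrite act_addr.
- by rewrite act0.
- move=> i; rewrite /scal /Gop /Graw /jF /= Y0_actodd // subrK add0r.
  have -> : n - j%:Z - i%:Z + 1 = 1 - j%:Z + n - i%:Z by lia.
  by rewrite -scal_act.
rewrite /ON /opcomm /Gop /Graw (mode0_act _ _ Hu Hb (f:=true)) // andbT /=.
rewrite actB // act_sgnv //.
by have -> : - j%:Z + 1 = 1 - j%:Z by rewrite addrC.
Qed.




Lemma claim2 gens V (A : NSVOSA gens V) e u b (j : nat) (n : int) w :
  Vpar A e u -> gfin b -> geven b ->
  let OB := fun v => act A b (Lop A (- j%:Z) v) in
  sums (fun i : nat => scal A (binz (1 - j%:Z) i)
              (Y1 A (act A b (Lop A (i%:Z - 1) u)) (n - j%:Z - i%:Z + 1) w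
               + scal A ((1 - j%:R - i%:R) / 2%:R)
                   (Y0 A (act A b (Gop A (i%:Z - 1) u)) (n - j%:Z - i%:Z) w)))
           (opcomm OB (Y1 A u n) w).
Proof.
move=> Hu Hb Hbe OB.
have [_ _ _ C] := comps (1 - j%:Z) n w Hu.
apply: (@sums_map _ (fun y => act A b (scl A (1/2) y)) _ _ _ _ _ _ C).
- by move=> x y; rewrite scal_addr act_addr.
- by rewrite scl_0 act0.
- move=> i; rewrite /scal /Gop /Graw /Lop /Lraw /jF /jF' /= Y1_act // Y0_act // Y1_scal subrK add0r.
  have -> : n - j%:Z - i%:Z + 1 = 1 - j%:Z + n - i%:Z by lia.
  have -> : n - j%:Z - i%:Z = 1 - j%:Z + n - i%:Z - 1 by lia.
  rewrite scal_addr scalM -!(scal_act A _ _ Hb) scal_sub actB // !scalM -actN // -scalN.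
  rewrite [_ * binz _ _]mulrC; congr (_ + act A b (scl A _ _)).
  rewrite intrB.
  by rewrite mulr1z (_ : (j%:Z)%:~R = j%:R) //; field.
rewrite /OB /opcomm /Lop /Lraw (mode1_act _ _ Hu Hb (f:=false)) // andbF /=.
rewrite (mode1_scal _ _ _ Hu) scal_sub actB //.
by have -> : - j%:Z + 1 = 1 - j%:Z by rewrite addrC.
Qed.




Lemma claim4 gens V (A : NSVOSA gens V) e u b (j : nat) (n : int) w :
  Vpar A e u -> gfin b -> godd b ->
  let ON := fun v => act A b (Gop A (- j%:Z) v) in
  sums (fun i : nat => scal A (binz (1 - j%:Z) i)
              (scal A 2%:R (Y0 A (act A b (Lop A (i%:Z - 1) u)) (n - j%:Z - i%:Z + 1) w)
               + Y1 A (act A b (Gop A (i%:Z - 1) u)) (n - j%:Z - i%:Z + 1) w))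
           (opcomm ON (Y1 A u n) w).
Proof.
move=> Hu Hb Hbo ON.
have [_ _ C _] := comps (1 - j%:Z) n w Hu.
apply: (@sums_map _ (fun y => - act A b y) _ _ _ _ _ _ C).
- by move=> x y; rewrite act_addr // opprD.
- by rewrite act0 // oppr0.
- move=> i; rewrite /scal /Gop /Graw /Lop /Lraw /jF /= Y0_actodd // Y1_actodd // Y0_scal subrK add0r.
  have -> : n - j%:Z - i%:Z + 1 = 1 - j%:Z + n - i%:Z by lia.
  rewrite scal_addr scal_opp !scalM -!(scal_act A _ _ Hb) !scalM actB // opprB.
  have -> : binz (1 - j%:Z) i * 2%:R * (1/2) = binz (1 - j%:Z) i by field.
  by [].
rewrite /ON /opcomm /Gop /Graw (mode1_act _ _ Hu Hb (f:=true)) // andbT /=.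
rewrite actB // actN // act_sgnv //.
have -> : - j%:Z + 1 = 1 - j%:Z by rewrite addrC.
by case: e Hu C => _ _ /=; rewrite ?opprD ?opprK.
Qed.



Lemma sums_ext (V : zmodType) (f g h : nat -> V) s t r :
  (forall i, h i = f i + g i) -> r = s + t -> sums f s -> sums g t -> sums h r.
Proof.
move=> Hh -> [K1 H1] [K2 H2]; exists (maxn K1 K2) => M HM.
rewrite geq_max in HM; case/andP: HM => HM1 HM2.
under eq_bigr => i _ do rewrite Hh.
by rewrite big_split /= H1 // H2.
Qed.

Lemma Lop_add gens V (A : NSVOSA gens V) k x y : Lop A k (x + y) = Lop A k x + Lop A k y.
Proof. by rewrite /Lop /Lraw (proj2 (mode_add A _ _ _ _)) scal_addr. Qed.

Lemma Gop_add gens V (A : NSVOSA gens V) k x y : Gop A k (x + y) = Gop A k x + Gop A k y.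
Proof. by rewrite /Gop /Graw (proj1 (mode_add A _ _ _ _)). Qed.

Lemma Y0_addl gens V (A : NSVOSA gens V) x y k w : Y0 A (x + y) k w = Y0 A x k w + Y0 A y k w.
Proof. exact: (proj1 (Y_add A _ _ _ _)). Qed.

Lemma Y1_addl gens V (A : NSVOSA gens V) x y k w : Y1 A (x + y) k w = Y1 A x k w + Y1 A y k w.
Proof. exact: (proj2 (Y_add A _ _ _ _)). Qed.

Lemma Y0_addr gens V (A : NSVOSA gens V) x k w1 w2 : Y0 A x k (w1 + w2) = Y0 A x k w1 + Y0 A x k w2.
Proof. exact: (proj1 (mode_add A _ _ _ _)). Qed.

Lemma Y1_addr gens V (A : NSVOSA gens V) x k w1 w2 : Y1 A x k (w1 + w2) = Y1 A x k w1 + Y1 A x k w2.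
Proof. exact: (proj2 (mode_add A _ _ _ _)). Qed.

Lemma ACA (V : zmodType) (a b c d : V) : (a + b) - (c + d) = (a - c) + (b - d).
Proof. by rewrite opprD addrACA. Qed.

Unset Implicit Arguments.

Theorem mainTheorem2 (gens : pred nat) (V : zmodType) (A : NSVOSA gens V)
  (B N : nat -> grass)
  (HB : forall j, (0 < j)%N -> gfin (B j) /\ geven (B j))
  (HN : forall j, (0 < j)%N -> gfin (N j) /\ godd (N j))
  (u : V) :
  forall (j : nat), (0 < j)%N -> forall (n : int) (w : V),
  let OB := fun v => act A (B j) (Lop A (- j%:Z) v) in
  let ON := fun v => act A (N j) (Gop A (- j%:Z) v) in
  [/\ sums (fun i : nat => scal A (binz (1 - j%:Z) i)
              (Y0 A (act A (B j) (Lop A (i%:Z - 1) u)) (n - j%:Z - i%:Z + 1) w))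
           (opcomm OB (Y0 A u n) w),
      sums (fun i : nat => scal A (binz (1 - j%:Z) i)
              (Y1 A (act A (B j) (Lop A (i%:Z - 1) u)) (n - j%:Z - i%:Z + 1) w
               + scal A ((1 - j%:R - i%:R) / 2%:R)
                   (Y0 A (act A (B j) (Gop A (i%:Z - 1) u)) (n - j%:Z - i%:Z) w)))
           (opcomm OB (Y1 A u n) w),
      sums (fun i : nat => scal A (binz (1 - j%:Z) i)
              (Y0 A (act A (N j) (Gop A (i%:Z - 1) u)) (n - j%:Z - i%:Z + 1) w))
           (opcomm ON (Y0 A u n) w) &
      sums (fun i : nat => scal A (binz (1 - j%:Z) i)
              (scal A 2%:R (Y0 A (act A (N j) (Lop A (i%:Z - 1) u)) (n - j%:Z - i%:Z + 1) w)
               + Y1 A (act A (N j) (Gop A (i%:Z - 1) u)) (n - j%:Z - i%:Z + 1) w))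
           (opcomm ON (Y1 A u n) w)].
Proof.
move=> j Hj n w OB ON.
have [Hb Hbe] := HB j Hj; have [Hn Hno] := HN j Hj.
have [u0 [u1 [H0 H1 ->]]] := par_dec A u.
have OBadd x y : OB (x + y) = OB x + OB y by rewrite /OB Lop_add act_addr.
have ONadd x y : ON (x + y) = ON x + ON y by rewrite /ON Gop_add act_addr.
split.
- apply: (sums_ext _ _ (claim1 j n w H0 Hb Hbe) (claim1 j n w H1 Hb Hbe)).
    by move=> i; rewrite /scal Lop_add act_addr // Y0_addl scal_addr.
  by rewrite /opcomm Y0_addl OBadd Y0_addl ACA.
- apply: (sums_ext _ _ (claim2 j n w H0 Hb Hbe) (claim2 j n w H1 Hb Hbe)).
    move=> i; rewrite Lop_add Gop_add !(act_addr A _ _ Hb) Y0_addl Y1_addl /scal !scal_addr.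
    by rewrite addrACA.
  by rewrite /opcomm Y1_addl OBadd Y1_addl ACA.
- apply: (sums_ext _ _ (claim3 j n w H0 Hn Hno) (claim3 j n w H1 Hn Hno)).
    by move=> i; rewrite /scal Gop_add act_addr // Y0_addl scal_addr.
  by rewrite /opcomm Y0_addl ONadd Y0_addl ACA.
- apply: (sums_ext _ _ (claim4 j n w H0 Hn Hno) (claim4 j n w H1 Hn Hno)).
    move=> i; rewrite Lop_add Gop_add !(act_addr A _ _ Hn) Y0_addl Y1_addl /scal !scal_addr.
    by rewrite addrACA.
  by rewrite /opcomm Y1_addl ONadd Y1_addl ACA.
Qed.
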